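(* For all constants $K_1,K_2,K_3,K_4>0$ there is a constant $K>0$ such that the following holds. Let $\varepsilon\in(0,1]$, let $A$ be a real $n\times n$ matrix, and let $q$ be a number with $K_1\varepsilon^{-2}\le q\le n$. Assume $\|A\|_C\le K_2\,\varepsilon n^2$, $\|A\|_F\le K_3\, n$, and $\max_{i,j}|A_{ij}|\le K_4\,\varepsilon^{-1}$. Let $Q$ be a random subset of $\{1,\dots,n\}$ in which each element is included independently with probability $q/n$. Then $$\mathbb E\,\|A|_{Q\times Q}\|_C\ \le\ K\,\varepsilon q^2.$$
   Context: The cut norm of a matrix $B=(B_{ij})$ is $\|B\|_C=\max_{I,J}\bigl|\sum_{i\in I,j\in J}B_{ij}\bigr|$, the maximum over all subsets $I$ of row indices and $J$ of column indices. $A|_{Q\times Q}=(A_{ij})_{i,j\in Q}$ is the principal submatrix on $Q$ (cut norm $0$ if $Q=\emptyset$). $\|A\|_F$ is the Frobenius norm. *)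

(* Defs.v *)
From HB Require Import structures.
From mathcomp Require Import all_boot all_order all_algebra.
From mathcomp Require Import reals.
Set Implicit Arguments. Unset Strict Implicit. Unset Printing Implicit Defensive.
Import Order.TTheory GRing.Theory Num.Theory.
Local Open Scope ring_scope.

Definition cut_norm (R : realType) (m n : nat) (B : 'M[R]_(m, n)) : R :=
  \big[Num.max/0]_(I : {set 'I_m}) \big[Num.max/0]_(J : {set 'I_n})
     `|\sum_(i in I) \sum_(j in J) B i j|.

Definition frob_norm (R : realType) (m n : nat) (B : 'M[R]_(m, n)) : R :=
  Num.sqrt (\sum_(i < m) \sum_(j < n) B i j ^+ 2).

(* Principal submatrix A|_{Q x Q}, indexed by the elements of Q (in increasing order). *)
Definition principal_submx (R : realType) (n : nat) (A : 'M[R]_n) (Q : {set 'I_n})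
  : 'M[R]_#|Q| :=
  \matrix_(i < #|Q|, j < #|Q|) A (enum_val i) (enum_val j).

Definition binom_subset_expect (R : realType) (n : nat) (p : R)
  (f : {set 'I_n} -> R) : R :=
  \sum_(Q : {set 'I_n}) p ^+ #|Q| * (1 - p) ^+ (n - #|Q|) * f Q.

(* Main.v *)
Require Import Defs.
From HB Require Import structures.
From mathcomp Require Import all_boot all_order all_algebra.
From mathcomp Require Import reals.
From mathcomp Require Import ring lra.
Import Order.TTheory GRing.Theory Num.Theory.
Local Open Scope ring_scope.

Module A1.
Set Implicit Arguments. Unset Strict Implicit. Unset Printing Implicit Defensive.
Import Order.TTheory GRing.Theory Num.Theory.
Local Open Scope ring_scope.
Set Implicit Arguments. Unset Strict Implicit. Unset Printing Implicit Defensive.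

Section Aux.
Variable R : realType.

Definition MX (T : finType) (f : T -> R) : R := \big[Num.max/0]_(t : T) f t.

Lemma MX_ge0 (T : finType) (f : T -> R) : 0 <= MX f.
Proof.
rewrite /MX; elim/big_rec: _ => // t x _ Hx.
by rewrite le_max Hx orbT.
Qed.

Lemma le_MX (T : finType) (f : T -> R) t : f t <= MX f.
Proof.
rewrite /MX (bigD1 t) //=.
by rewrite le_max lexx.
Qed.

Lemma MX_le (T : finType) (f : T -> R) c : 0 <= c -> (forall t, f t <= c) -> MX f <= c.
Proof.
move=> c0 H; rewrite /MX; elim/big_rec: _ => // t x _ Hx.
by rewrite ge_max Hx H.
Qed.

Lemma MX_mono (T : finType) (f g : T -> R) : (forall t, f t <= g t) -> MX f <= MX g.
Proof.
move=> H; apply: MX_le; first exact: MX_ge0.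
move=> t; apply: le_trans (H t) (le_MX _ _).
Qed.

Lemma MX_add (T : finType) (f g : T -> R) : MX (fun t => f t + g t) <= MX f + MX g.
Proof.
apply: MX_le; first by rewrite addr_ge0 // MX_ge0.
by move=> t; rewrite lerD // le_MX.
Qed.

Lemma MX_scale (T : finType) (f : T -> R) c : 0 <= c -> MX (fun t => c * f t) <= c * MX f.
Proof.
move=> c0; apply: MX_le; first by rewrite mulr_ge0 // MX_ge0.
by move=> t; rewrite ler_wpM2l // le_MX.
Qed.

Lemma MX_swap (T U : finType) (F : T -> U -> R) :
  MX (fun t => MX (fun u => F t u)) <= MX (fun u => MX (fun t => F t u)).
Proof.
apply: MX_le; first exact: MX_ge0.
move=> t; apply: MX_le; first exact: MX_ge0.
move=> u; apply: le_trans (le_MX _ u); exact: (le_MX (fun t => F t u)).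
Qed.

Lemma abs_MX (T : finType) (f : T -> R) t : `|f t| <= MX f + MX (fun t => - f t).
Proof.
have h1 := le_MX f t; have h2 := le_MX (fun t => - f t) t.
have h3 := MX_ge0 f; have h4 := MX_ge0 (fun t => - f t).
rewrite /= in h2.
case: (lerP 0 (f t)) => h; [rewrite ger0_norm // | rewrite ltr0_norm //]; lra.
Qed.

Definition phi (x : R) := Num.max x 0.

Lemma phi_ge0 x : 0 <= phi x. Proof. by rewrite /phi le_max lexx orbT. Qed.
Lemma phi_ge x : x <= phi x. Proof. by rewrite /phi le_max lexx. Qed.
Lemma phi_le_abs x : phi x <= `|x|.
Proof. by rewrite /phi ge_max normr_ge0 ler_norm. Qed.
Lemma phi_lip x y : phi x - phi y <= `|x - y|.
Proof.
rewrite lerBlDl /phi ge_max; apply/andP; split.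
- have h1 := ler_norm (x - y); have h2 : y <= Num.max y 0 by rewrite le_max lexx.
  lra.
- have h1 := normr_ge0 (x - y); have h2 : 0 <= Num.max y 0 by rewrite le_max lexx orbT.
  lra.
Qed.

Lemma phi_cases x : (phi x = x /\ 0 <= x) \/ (phi x = 0 /\ x <= 0).
Proof.
case: (lerP 0 x) => h.
- left; split => //; apply/eqP; rewrite eq_le phi_ge andbT /phi ge_max lexx h //.
- right; split; last exact: ltW.
  apply/eqP; rewrite eq_le phi_ge0 andbT /phi ge_max lexx (ltW h) //.
Qed.

Lemma contraction (T : finType) (a Rf : T -> R) :
  MX (fun t => phi (a t) + Rf t) + MX (fun t => Rf t - phi (a t))
  <= MX (fun t => a t + Rf t) + MX (fun t => Rf t - a t).
Proof.
set S := MX (fun t => a t + Rf t) + MX (fun t => Rf t - a t).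
have S1 : forall t, a t + Rf t <= MX (fun t => a t + Rf t) by move=> t; exact: (le_MX (fun t => a t + Rf t)).
have S2 : forall t, Rf t - a t <= MX (fun t => Rf t - a t) by move=> t; exact: (le_MX (fun t => Rf t - a t)).
have P1 := MX_ge0 (fun t => a t + Rf t).
have P2 := MX_ge0 (fun t => Rf t - a t).
rewrite -lerBrDr; apply: MX_le.
  rewrite subr_ge0; apply: MX_le; first by rewrite /S; lra.
  move=> t; have := S2 t; have := phi_ge (a t); rewrite /S; lra.
move=> t; rewrite lerBrDr -lerBrDl; apply: MX_le.
  have := S1 t; have := S2 t; have := phi_cases (a t); rewrite /S; lra.
move=> t'; have := S1 t; have := S2 t; have := S1 t'; have := S2 t'.
have := phi_lip (a t) (a t'). 
case: (lerP (a t') (a t)) => h.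
  rewrite /S; lra.
rewrite /S; lra.
Qed.

Section Fin.
Variable n : nat.
Definition ind (b : bool) : R := (b%:R).

Lemma ind_ge0 b : 0 <= ind b. Proof. by case: b; rewrite /ind. Qed.

Lemma MX_closed (v : 'I_n -> R) :
  MX (fun X : {set 'I_n} => \sum_i ind (i \in X) * v i) = \sum_i phi (v i).
Proof.
apply/eqP; rewrite eq_le; apply/andP; split.
  apply: MX_le; first by apply: sumr_ge0 => i _; exact: phi_ge0.
  move=> X; apply: ler_sum => i _; rewrite /ind; case: (i \in X); rewrite ?mul1r ?mul0r.
    exact: phi_ge.
  exact: phi_ge0.
apply: le_trans (le_MX _ [set i | 0 <= v i]).
apply: ler_sum => i _; rewrite inE /ind; case: (phi_cases (v i)) => [[-> h]|[-> h]].
  by rewrite h mul1r.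
case: (lerP 0 (v i)) => h' /=; rewrite ?mul1r ?mul0r //.
Qed.

End Fin.

End Aux.

End A1.
Import A1.

Module A2.
Set Implicit Arguments. Unset Strict Implicit. Unset Printing Implicit Defensive.
Import Order.TTheory GRing.Theory Num.Theory.
Local Open Scope ring_scope.
Set Implicit Arguments. Unset Strict Implicit. Unset Printing Implicit Defensive.

Section Expect.
Variable R : realType.
Variable n : nat.
Variable p : R.
Hypothesis p0 : 0 <= p.
Hypothesis p1 : p <= 1.

Definition wt (Q : {set 'I_n}) : R := p ^+ #|Q| * (1 - p) ^+ (n - #|Q|).
Definition Ex (f : {set 'I_n} -> R) : R := \sum_Q wt Q * f Q.
Definition Wk (Q : {set 'I_n}) : R := p ^+ #|Q| * (1 - p) ^+ (n - #|Q|).-1.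
Definition tog (k : 'I_n) (Q : {set 'I_n}) := if k \in Q then Q :\ k else k |: Q.

Lemma togK (k : 'I_n) : involutive (tog k).
Proof.
move=> Q; rewrite /tog; case: (boolP (k \in Q)) => h.
  by rewrite !inE eqxx /= setD1K.
by rewrite !inE eqxx /= setU1K.
Qed.

Lemma Wk_ge0 Q : 0 <= Wk Q.
Proof. by rewrite /Wk mulr_ge0 // exprn_ge0 // subr_ge0. Qed.

Lemma wt_ge0 Q : 0 <= wt Q.
Proof. by rewrite /wt mulr_ge0 // exprn_ge0 // subr_ge0. Qed.

Lemma wt_split (k : 'I_n) (Q : {set 'I_n}) : k \notin Q -> wt (k |: Q) = p * Wk Q /\ wt Q = (1 - p) * Wk Q.
Proof.
move=> kQ; have hc : #|k |: Q| = #|Q|.+1 by rewrite cardsU1 kQ.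
have hn : (#|Q| < n)%N.
  by have := max_card (mem (k |: Q)); rewrite card_ord -hc.
rewrite /wt /Wk hc subnS exprS; split; first by ring.
have -> : (n - #|Q|)%N = ((n - #|Q|).-1).+1 by rewrite prednK // subn_gt0.
by rewrite exprS /=; ring.
Qed.

Lemma Ex_split (k : 'I_n) f :
  Ex f = \sum_(Q : {set 'I_n} | k \notin Q) Wk Q * (p * f (k |: Q) + (1 - p) * f Q).
Proof.
rewrite /Ex (bigID (fun Q : {set 'I_n} => k \in Q)) /=.
rewrite (reindex_inj (can_inj (togK k))) /=.
have -> : \sum_(Q : {set 'I_n} | k \in tog k Q) wt (tog k Q) * f (tog k Q) =
          \sum_(Q : {set 'I_n} | k \notin Q) wt (k |: Q) * f (k |: Q).
  apply: eq_big.
    by move=> Q; rewrite /tog; case: (boolP (k \in Q)) => h /=; rewrite !inE eqxx.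
  move=> Q; rewrite /tog; case: (boolP (k \in Q)) => h //=.
  by rewrite !inE eqxx.
rewrite -big_split /=; apply: eq_bigr => Q kQ.
have [-> ->] := wt_split kQ; ring.
Qed.

Lemma Ex_le_split (k : 'I_n) (f g : {set 'I_n} -> R) :
  (forall Q : {set 'I_n}, k \notin Q -> p * f (k |: Q) + (1 - p) * f Q <= p * g (k |: Q) + (1 - p) * g Q) ->
  Ex f <= Ex g.
Proof.
move=> H; rewrite (Ex_split k f) (Ex_split k g); apply: ler_sum => Q kQ.
by apply: ler_wpM2l; [exact: Wk_ge0 | exact: H].
Qed.

Lemma Ex_eq_split (k : 'I_n) (f g : {set 'I_n} -> R) :
  (forall Q : {set 'I_n}, k \notin Q -> p * f (k |: Q) + (1 - p) * f Q = p * g (k |: Q) + (1 - p) * g Q) ->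
  Ex f = Ex g.
Proof.
move=> H; apply: le_anti; apply/andP; split.
  by apply: (Ex_le_split (k:=k)) => Q kQ; rewrite H.
by apply: (Ex_le_split (k:=k)) => Q kQ; rewrite H.
Qed.

Lemma Ex_mono (f g : {set 'I_n} -> R) : (forall Q, f Q <= g Q) -> Ex f <= Ex g.
Proof. by move=> H; apply: ler_sum => Q _; apply: ler_wpM2l; [exact: wt_ge0|exact: H]. Qed.

Lemma Ex_add (f g : {set 'I_n} -> R) : Ex (fun Q => f Q + g Q) = Ex f + Ex g.
Proof. by rewrite /Ex -big_split; apply: eq_bigr => Q _; rewrite mulrDr. Qed.

Lemma Ex_scale c (f : {set 'I_n} -> R) : Ex (fun Q => c * f Q) = c * Ex f.
Proof. by rewrite /Ex mulr_sumr; apply: eq_bigr => Q _; rewrite mulrCA. Qed.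

Lemma Ex_sum (I : finType) (F : I -> {set 'I_n} -> R) :
  Ex (fun Q => \sum_i F i Q) = \sum_i Ex (F i).
Proof.
rewrite /Ex exchange_big /=; apply: eq_bigr => Q _; by rewrite mulr_sumr.
Qed.

Lemma wt_sum1 : \sum_Q wt Q = 1.
Proof.
have H1 : \prod_(i : 'I_n) \sum_(b : bool) (if b then p else 1 - p) = 1.
  by rewrite big1 // => i _; rewrite big_bool /=; ring.
rewrite -H1 bigA_distr_bigA /=.
rewrite (reindex (fun Q : {set 'I_n} => [ffun i => i \in Q])) /=; last first.
  exists (fun f : {ffun 'I_n -> bool} => [set i | f i]) => f _.
    by apply/setP => i; rewrite inE ffunE.
  by apply/ffunP => i; rewrite ffunE inE.
apply: eq_bigr => Q _; rewrite /wt.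
under eq_bigr => i _ do rewrite ffunE.
rewrite (bigID (mem Q)) /=.
rewrite (eq_bigr (fun _ => p)); last by move=> i iQ; rewrite iQ.
have -> : \prod_(i | ~~ (i \in Q)) (if i \in Q then p else 1 - p) = \prod_(i | ~~ (i \in Q)) (1 - p).
  by apply: eq_bigr => i iQ; rewrite (negbTE iQ).
rewrite !prodr_const; congr (_ * _ ^+ _).
have hC : (#|Q| + #|[predC Q]| = n)%N by rewrite -[in RHS](card_ord n) cardC.
rewrite -[in X in (X - _)%N]hC addKn.
by apply: eq_card => i; rewrite !inE.
Qed.

Lemma Ex_const c : Ex (fun _ => c) = c.
Proof. by rewrite /Ex -mulr_suml wt_sum1 mul1r. Qed.

Definition E2 (F : {set 'I_n} -> {set 'I_n} -> R) := Ex (fun Q => Ex (fun Q' => F Q Q')).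

Definition comb4 (k : 'I_n) (F : {set 'I_n} -> {set 'I_n} -> R) (Q Q' : {set 'I_n}) :=
  p * (p * F (k |: Q) (k |: Q') + (1 - p) * F (k |: Q) Q') +
  (1 - p) * (p * F Q (k |: Q') + (1 - p) * F Q Q').

Lemma E2_le_split (k : 'I_n) (F G : {set 'I_n} -> {set 'I_n} -> R) :
  (forall Q Q' : {set 'I_n}, k \notin Q -> k \notin Q' -> comb4 k F Q Q' <= comb4 k G Q Q') ->
  E2 F <= E2 G.
Proof.
move=> H; rewrite /E2; apply: (Ex_le_split (k:=k)) => Q kQ.
rewrite -!Ex_scale -!Ex_add; apply: (Ex_le_split (k:=k)) => Q' kQ'.
have := H Q Q' kQ kQ'; rewrite /comb4; lra.
Qed.

Lemma E2_eq_split (k : 'I_n) (F G : {set 'I_n} -> {set 'I_n} -> R) :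
  (forall Q Q' : {set 'I_n}, k \notin Q -> k \notin Q' -> comb4 k F Q Q' = comb4 k G Q Q') ->
  E2 F = E2 G.
Proof.
move=> H; apply: le_anti; apply/andP; split.
  by apply: (E2_le_split (k:=k)) => Q Q' kQ kQ'; rewrite H.
by apply: (E2_le_split (k:=k)) => Q Q' kQ kQ'; rewrite H.
Qed.

End Expect.

End A2.
Import A2.

Module A3.
Set Implicit Arguments. Unset Strict Implicit. Unset Printing Implicit Defensive.
Import Order.TTheory GRing.Theory Num.Theory.
Local Open Scope ring_scope.
Set Implicit Arguments. Unset Strict Implicit. Unset Printing Implicit Defensive.

Section Contr.
Variable R : realType.
Variable n : nat.
Variable p : R.
Hypothesis p0 : 0 <= p.
Hypothesis p1 : p <= 1.

Notation Ex := (@Ex R n p).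
Notation E2 := (@E2 R n p).

Lemma eq_MX (T : finType) (f g : T -> R) : (forall t, f t = g t) -> MX f = MX g.
Proof. by move=> H; rewrite /MX; apply: eq_bigr => t _; rewrite H. Qed.

Lemma inv_add (U : Type) (k : 'I_n) (f : {set 'I_n} -> U) (Q : {set 'I_n}) :
  (forall Q : {set 'I_n}, f Q = f (Q :\ k)) -> k \notin Q -> f (k |: Q) = f Q.
Proof. by move=> H kQ; rewrite H setU1K. Qed.

Lemma ind_in_add (k : 'I_n) (Q : {set 'I_n}) : ind R (k \in k |: Q) = 1.
Proof. by rewrite setU11. Qed.

Lemma ind_notin (k : 'I_n) (Q : {set 'I_n}) : k \notin Q -> ind R (k \in Q) = 0.
Proof. by move/negbTE => ->. Qed.

Lemma phi0 : phi (0 : R) = 0.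
Proof. by apply/eqP; rewrite eq_le phi_ge0 /phi ge_max lexx. Qed.

Lemma contr_step (T : finType) (k : 'I_n) (a : T -> {set 'I_n} -> R)
  (Rf : T -> {set 'I_n} -> {set 'I_n} -> R) :
  (forall t (Q : {set 'I_n}), a t Q = a t (Q :\ k)) ->
  (forall t (Q Q' : {set 'I_n}), Rf t Q Q' = Rf t (Q :\ k) Q') ->
  (forall t (Q Q' : {set 'I_n}), Rf t Q Q' = Rf t Q (Q' :\ k)) ->
  E2 (fun Q Q' => MX (fun t => (ind R (k \in Q) - p) * phi (a t Q) + Rf t Q Q'))
  <= E2 (fun Q Q' => MX (fun t => (ind R (k \in Q) - ind R (k \in Q')) * a t Q + Rf t Q Q')).
Proof.
move=> Ha HR1 HR2; apply: (E2_le_split p0 p1 (k:=k)) => Q Q' kQ kQ'.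
rewrite /comb4.
have ea : forall t, a t (k |: Q) = a t Q by move=> t; apply: (inv_add (f := a t)).
have eb1 : forall t Q0, Rf t (k |: Q) Q0 = Rf t Q Q0.
  by move=> t Q0; apply: (inv_add (f := fun Q => Rf t Q Q0)) => // Q1; apply: HR1.
have eb2 : forall t Q0, Rf t Q0 (k |: Q') = Rf t Q0 Q'.
  by move=> t Q0; apply: (inv_add (f := fun Q => Rf t Q0 Q)) => // Q1; apply: HR2.
rewrite !ind_in_add !(ind_notin kQ) !(ind_notin kQ').
set A := fun t => a t Q; set B := fun t => Rf t Q Q'.
have L1 : MX (fun t => (1 - p) * phi (a t (k |: Q)) + Rf t (k |: Q) (k |: Q'))
          <= (1 - p) * MX (fun t => phi (A t) + B t) + p * MX B.
  rewrite (eq_MX (g := fun t => (1 - p) * (phi (A t) + B t) + p * B t)); last first.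
    by move=> t; rewrite ea eb1 eb2 /A /B; ring.
  apply: le_trans (MX_add _ _) _; apply: lerD; apply: MX_scale; rewrite ?subr_ge0 //.
have L2 : MX (fun t => (1 - p) * phi (a t (k |: Q)) + Rf t (k |: Q) Q')
          <= (1 - p) * MX (fun t => phi (A t) + B t) + p * MX B.
  rewrite (eq_MX (g := fun t => (1 - p) * (phi (A t) + B t) + p * B t)); last first.
    by move=> t; rewrite ea eb1 /A /B; ring.
  apply: le_trans (MX_add _ _) _; apply: lerD; apply: MX_scale; rewrite ?subr_ge0 //.
have L3 : MX (fun t => (0 - p) * phi (a t Q) + Rf t Q (k |: Q'))
          <= p * MX (fun t => B t - phi (A t)) + (1 - p) * MX B.
  rewrite (eq_MX (g := fun t => p * (B t - phi (A t)) + (1 - p) * B t)); last first.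
    by move=> t; rewrite eb2 /A /B; ring.
  apply: le_trans (MX_add _ _) _; apply: lerD; apply: MX_scale; rewrite ?subr_ge0 //.
have L4 : MX (fun t => (0 - p) * phi (a t Q) + Rf t Q Q')
          <= p * MX (fun t => B t - phi (A t)) + (1 - p) * MX B.
  rewrite (eq_MX (g := fun t => p * (B t - phi (A t)) + (1 - p) * B t)); last first.
    by move=> t; rewrite /A /B; ring.
  apply: le_trans (MX_add _ _) _; apply: lerD; apply: MX_scale; rewrite ?subr_ge0 //.
have C := contraction A B.
rewrite (eq_MX (f := fun t => (1 - 1) * a t (k |: Q) + Rf t (k |: Q) (k |: Q')) (g := B)); last first.
  by move=> t; rewrite ea eb1 eb2 /B; ring.
rewrite (eq_MX (f := fun t => (1 - 0) * a t (k |: Q) + Rf t (k |: Q) Q') (g := fun t => A t + B t)); last first.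
  by move=> t; rewrite ea eb1 /A /B; ring.
rewrite (eq_MX (f := fun t => (0 - 1) * a t Q + Rf t Q (k |: Q')) (g := fun t => B t - A t)); last first.
  by move=> t; rewrite eb2 /A /B; ring.
rewrite (eq_MX (f := fun t => (0 - 0) * a t Q + Rf t Q Q') (g := B)); last first.
  by move=> t; rewrite /B; ring.
set X1 := MX (fun t => phi (A t) + B t) in L1 L2 C *.
set X2 := MX (fun t => B t - phi (A t)) in L3 L4 C *.
set Y := MX B in L1 L2 L3 L4 *.
set Z1 := MX (fun t => A t + B t) in C *.
set Z2 := MX (fun t => B t - A t) in C *.
have q0 : 0 <= 1 - p by rewrite subr_ge0.
have S1 := lerD (ler_wpM2l p0 L1) (ler_wpM2l q0 L2).
have S2 := lerD (ler_wpM2l p0 L3) (ler_wpM2l q0 L4).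
apply: le_trans (lerD (ler_wpM2l p0 S1) (ler_wpM2l q0 S2)) _.
rewrite -subr_ge0.
have -> : p * (p * Y + (1 - p) * Z1) + (1 - p) * (p * Z2 + (1 - p) * Y) -
  (p * (p * ((1 - p) * X1 + p * Y) + (1 - p) * ((1 - p) * X1 + p * Y)) +
   (1 - p) * (p * (p * X2 + (1 - p) * Y) + (1 - p) * (p * X2 + (1 - p) * Y)))
  = p * (1 - p) * ((Z1 + Z2) - (X1 + X2)) by ring.
by rewrite mulr_ge0 ?subr_ge0 // mulr_ge0.
Qed.

Lemma contr_all (T : finType) (P : {set 'I_n}) (a : 'I_n -> T -> {set 'I_n} -> R) :
  (forall k t (Q : {set 'I_n}), k \notin P -> a k t Q = 0) ->
  (forall k i t (Q : {set 'I_n}), k \in P -> a i t Q = a i t (Q :\ k)) ->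
  Ex (fun Q => MX (fun t => \sum_i (ind R (i \in Q) - p) * phi (a i t Q)))
  <= E2 (fun Q Q' => MX (fun t => \sum_i (ind R (i \in Q) - ind R (i \in Q')) * a i t Q)).
Proof.
move=> H0 Hinv.
pose Mix (m : nat) (Q Q' : {set 'I_n}) := MX (fun t : T => \sum_(i : 'I_n)
  (if (i < m)%N then (ind R (i \in Q) - ind R (i \in Q')) * a i t Q
   else (ind R (i \in Q) - p) * phi (a i t Q))).
have E0 : Ex (fun Q => MX (fun t => \sum_i (ind R (i \in Q) - p) * phi (a i t Q))) = E2 (Mix 0%N).
  rewrite /E2 /Ex; apply: eq_bigr => Q _; congr (_ * _).
  rewrite -[LHS](Ex_const n p); apply: eq_bigr => Q' _; congr (_ * _).
have En : E2 (Mix n) = E2 (fun Q Q' => MX (fun t => \sum_i (ind R (i \in Q) - ind R (i \in Q')) * a i t Q)).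
  rewrite /E2 /Ex; apply: eq_bigr => Q _; congr (_ * _); apply: eq_bigr => Q' _; congr (_ * _).
  by apply: eq_MX => t; apply: eq_bigr => i _; rewrite ltn_ord.
have step : forall m, (m < n)%N -> E2 (Mix m) <= E2 (Mix m.+1).
  move=> m mn; pose k := Ordinal mn.
  pose Rf t (Q Q' : {set 'I_n}) := \sum_(i | i != k)
    (if (i < m)%N then (ind R (i \in Q) - ind R (i \in Q')) * a i t Q
     else (ind R (i \in Q) - p) * phi (a i t Q)).
  have eM0 : forall Q Q', Mix m Q Q' = MX (fun t => (ind R (k \in Q) - p) * phi (a k t Q) + Rf t Q Q').
    move=> Q Q'; apply: eq_MX => t; rewrite (bigD1 k) //= ltnn //.
  have eM1 : forall Q Q', Mix m.+1 Q Q' =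
      MX (fun t => (ind R (k \in Q) - ind R (k \in Q')) * a k t Q + Rf t Q Q').
    move=> Q Q'; apply: eq_MX => t; rewrite (bigD1 k) //= ltnSn; congr (_ + _).
    apply: eq_bigr => i ik; rewrite ltnS leq_eqVlt.
    have -> : (nat_of_ord i == m) = false.
      by apply/negbTE; apply: contra ik => /eqP h; apply/eqP/val_inj.
    by [].
  rewrite /E2 /Ex.
  under eq_bigr => Q _ do under eq_bigr => Q' _ do rewrite eM0.
  under [X in _ <= X]eq_bigr => Q _ do under eq_bigr => Q' _ do rewrite eM1.
  case: (boolP (k \in P)) => kP.
    apply: (contr_step (k := k) (a := a k) (Rf := Rf)).
    - by move=> t Q; apply: Hinv.
    - move=> t Q Q'; apply: eq_bigr => i ik.
      by rewrite [in RHS]in_setD1 ik /= -(Hinv k i t Q kP).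
    - move=> t Q Q'; apply: eq_bigr => i ik.
      by rewrite [in RHS]in_setD1 ik.
  rewrite le_eqVlt; apply/orP; left; apply/eqP.
  apply: eq_bigr => Q _; congr (_ * _); apply: eq_bigr => Q' _; congr (_ * _).
  by apply: eq_MX => t; rewrite !H0 // phi0 !mulr0.
have chain : forall m, (m <= n)%N -> E2 (Mix 0%N) <= E2 (Mix m).
  elim => [|m IH] mn //; apply: le_trans (IH (ltnW mn)) (step m mn).
by rewrite E0 -En; apply: chain.
Qed.

End Contr.

End A3.
Import A3.

Module A4.
Set Implicit Arguments. Unset Strict Implicit. Unset Printing Implicit Defensive.
Import Order.TTheory GRing.Theory Num.Theory.
Local Open Scope ring_scope.
Set Implicit Arguments. Unset Strict Implicit. Unset Printing Implicit Defensive.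

Section Moments.
Variable R : realType.
Variable n : nat.
Variable p : R.
Hypothesis p0 : 0 <= p.
Hypothesis p1 : p <= 1.

Notation Ex := (@Ex R n p).
Notation E2 := (@E2 R n p).
Notation ind := (ind R).

Lemma E2_ext F G : (forall Q Q', F Q Q' = G Q Q') -> E2 F = E2 G.
Proof.
move=> H; rewrite /A2.E2 /A2.Ex; apply: eq_bigr => Q _; congr (_ * _).
by apply: eq_bigr => Q' _; rewrite H.
Qed.

Lemma E2_mono F G : (forall Q Q', F Q Q' <= G Q Q') -> E2 F <= E2 G.
Proof. by move=> H; apply: Ex_mono => // Q; apply: Ex_mono. Qed.

Lemma E2_add F G : E2 (fun Q Q' => F Q Q' + G Q Q') = E2 F + E2 G.
Proof. by rewrite /E2 -Ex_add; apply: eq_bigr => Q _; rewrite Ex_add. Qed.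

Lemma E2_scale c F : E2 (fun Q Q' => c * F Q Q') = c * E2 F.
Proof. by rewrite /E2 -Ex_scale; apply: eq_bigr => Q _; rewrite Ex_scale. Qed.

Lemma E2_sum (I : finType) (F : I -> {set 'I_n} -> {set 'I_n} -> R) :
  E2 (fun Q Q' => \sum_i F i Q Q') = \sum_i E2 (F i).
Proof.
rewrite /E2 -Ex_sum; apply: eq_bigr => Q _; by rewrite Ex_sum.
Qed.

Lemma E2_const c : E2 (fun _ _ => c) = c.
Proof. by rewrite /E2 !Ex_const. Qed.

Lemma Ex_ind_mul (k : 'I_n) (g : {set 'I_n} -> R) :
  (forall Q : {set 'I_n}, g Q = g (Q :\ k)) ->
  Ex (fun Q => ind (k \in Q) * g Q) = p * Ex g.
Proof.
move=> Hg; rewrite -Ex_scale; apply: (Ex_eq_split p0 p1 (k:=k)) => Q kQ.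
rewrite (ind_in_add R) (ind_notin R kQ) (inv_add (f := g)) //; ring.
Qed.

Lemma E2_ss (i j : 'I_n) :
  E2 (fun Q Q' => (ind (i \in Q) - ind (i \in Q')) * (ind (j \in Q) - ind (j \in Q')))
  = if i == j then 2 * p * (1 - p) else 0.
Proof.
rewrite -[RHS]E2_const; apply: (E2_eq_split p0 p1 (k:=i)) => Q Q' iQ iQ'.
rewrite /comb4 !(ind_in_add R) !(ind_notin R iQ) !(ind_notin R iQ').
case: (eqVneq i j) => [<-|ij].
  by rewrite !(ind_in_add R) !(ind_notin R iQ) !(ind_notin R iQ'); ring.
have e : forall Q0 : {set 'I_n}, ind (j \in i |: Q0) = ind (j \in Q0).
  by move=> Q0; rewrite in_setU1 eq_sym (negbTE ij).
rewrite !e; ring.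
Qed.

Lemma E2_var (b : 'I_n -> R) :
  E2 (fun Q Q' => (\sum_j (ind (j \in Q) - ind (j \in Q')) * b j) ^+ 2)
  <= 2 * p * \sum_j b j ^+ 2.
Proof.
have -> : E2 (fun Q Q' => (\sum_j (ind (j \in Q) - ind (j \in Q')) * b j) ^+ 2)
  = E2 (fun Q Q' => \sum_j \sum_k (b j * b k) *
        ((ind (j \in Q) - ind (j \in Q')) * (ind (k \in Q) - ind (k \in Q')))).
  rewrite /E2 /A2.Ex; apply: eq_bigr => Q _; congr (_ * _); apply: eq_bigr => Q' _; congr (_ * _).
  rewrite expr2 big_distrl /=; apply: eq_bigr => j _; rewrite big_distrr /=.
  by apply: eq_bigr => k _; ring.
rewrite E2_sum; under eq_bigr => j _ do rewrite E2_sum.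
under eq_bigr => j _ do under eq_bigr => k _ do rewrite E2_scale E2_ss.
rewrite mulr_sumr; apply: ler_sum => j _.
rewrite (bigD1 j) //= eqxx big1; last by move=> k kj; rewrite eq_sym (negbTE kj) mulr0.
rewrite addr0 -subr_ge0.
have -> : 2 * p * b j ^+ 2 - b j * b j * (2 * p * (1 - p)) = 2 * p * p * (b j ^+ 2) by ring.
by rewrite mulr_ge0 ?sqr_ge0 // !mulr_ge0.
Qed.

Lemma abs_amgm (x l : R) : 0 < l -> `|x| <= (x ^+ 2 / l + l) / 2.
Proof.
move=> l0; rewrite ler_pdivlMr // -(ler_pM2r l0) mulrDl mulfVK ?gt_eqF //.
rewrite -real_normK ?num_real // -subr_ge0.
have -> : `|x| ^+ 2 + l * l - `|x| * 2 * l = (`|x| - l) ^+ 2 by ring.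
exact: sqr_ge0.
Qed.

Lemma abs_amgm' (x l : R) : 0 < l -> `|x| <= x ^+ 2 * (l^-1 / 2) + l / 2.
Proof.
move=> l0; apply: le_trans (abs_amgm x l0) _.
by rewrite le_eqVlt; apply/orP; left; apply/eqP; rewrite mulrDl mulrA.
Qed.

Lemma E2_abs (b : 'I_n -> R) l : 0 < l ->
  E2 (fun Q Q' => `|\sum_j (ind (j \in Q) - ind (j \in Q')) * b j|)
  <= (2 * p * (\sum_j b j ^+ 2)) * (l^-1 / 2) + l / 2.
Proof.
move=> l0; apply: le_trans (E2_mono (G := fun Q Q' =>
  ((\sum_j (ind (j \in Q) - ind (j \in Q')) * b j) ^+ 2 * (l^-1 / 2) + l / 2)) _) _.
  by move=> Q Q'; apply: abs_amgm'.
rewrite E2_add E2_const lerD2r.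
have -> : E2 (fun Q Q' => (\sum_j (ind (j \in Q) - ind (j \in Q')) * b j) ^+ 2 * (l^-1 / 2))
  = (l^-1 / 2) * E2 (fun Q Q' => (\sum_j (ind (j \in Q) - ind (j \in Q')) * b j) ^+ 2).
  by rewrite -E2_scale; apply: E2_ext => Q Q'; rewrite mulrC.
rewrite [X in _ <= X]mulrC; apply: ler_wpM2l; last exact: E2_var.
by rewrite mulr_ge0 // invr_ge0 ltW.
Qed.

End Moments.

End A4.
Import A4.

Module A5.
Set Implicit Arguments. Unset Strict Implicit. Unset Printing Implicit Defensive.
Import Order.TTheory GRing.Theory Num.Theory.
Local Open Scope ring_scope.
Set Implicit Arguments. Unset Strict Implicit. Unset Printing Implicit Defensive.

Section Main.
Variable R : realType.
Variable n : nat.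
Variable p : R.
Hypothesis p0 : 0 <= p.
Hypothesis p1 : p <= 1.

Notation Ex := (@Ex R n p).
Notation E2 := (@E2 R n p).
Notation ind := (ind R).

Lemma ind_phi b (c : R) : phi (ind b * c) = ind b * phi c.
Proof. by case: b; rewrite /A1.ind /= ?mul1r ?mul0r ?phi0. Qed.

Lemma ind_sq b : ind b * ind b = ind b.
Proof. by case: b; rewrite /A1.ind /= ?mul1r ?mul0r. Qed.

Lemma ind_setD1 (i k : 'I_n) (Q : {set 'I_n}) : i != k -> ind (i \in Q :\ k) = ind (i \in Q).
Proof. by move=> ik; rewrite in_setD1 ik. Qed.

Lemma phi_ind_abs b (c : R) : phi (ind b * c) <= ind b * `|c|.
Proof. rewrite ind_phi; apply: ler_wpM2l; [exact: ind_ge0 | exact: phi_le_abs]. Qed.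

Lemma Ex_ext (f g : {set 'I_n} -> R) : (forall Q, f Q = g Q) -> Ex f = Ex g.
Proof. by move=> H; apply: eq_bigr => Q _; rewrite H. Qed.

Lemma E2_ind_mul (k : 'I_n) (g : {set 'I_n} -> {set 'I_n} -> R) :
  (forall Q Q' : {set 'I_n}, g Q Q' = g (Q :\ k) Q') ->
  E2 (fun Q Q' => ind (k \in Q) * g Q Q') = p * E2 g.
Proof.
move=> Hg; rewrite /A2.E2.
rewrite (Ex_ext (g := fun Q => ind (k \in Q) * Ex (fun Q' => g Q Q'))); last by move=> Q; rewrite Ex_scale.
apply: Ex_ind_mul => // Q; apply: Ex_ext => Q'; exact: Hg.
Qed.

Lemma sum_affine (a b : R) (f : 'I_n -> R) :
  \sum_j (a * f j + b) = a * \sum_j f j + n%:R * b.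
Proof. by rewrite big_split /= -mulr_sumr sumr_const card_ord mulr_natl. Qed.

Variable P : {set 'I_n}.
Variable B : 'I_n -> 'I_n -> R.
Hypothesis hB : forall i j, ~~ ((i \in P) && (j \notin P)) -> B i j = 0.

Lemma B_diag i : B i i = 0.
Proof. by apply: hB; case: (i \in P). Qed.

Definition SB (X Y Q : {set 'I_n}) :=
  \sum_i \sum_j ind (i \in X) * ind (i \in Q) * B i j * ind (j \in Q) * ind (j \in Y).
Definition GB Q := MX (fun X : {set 'I_n} => MX (fun Y : {set 'I_n} => SB X Y Q)).
Definition Gfull := MX (fun X : {set 'I_n} => MX (fun Y : {set 'I_n} =>
  \sum_i \sum_j ind (i \in X) * B i j * ind (j \in Y))).
Definition F2 := \sum_i \sum_j B i j ^+ 2.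

Definition cB (Y Q : {set 'I_n}) i := \sum_j B i j * ind (j \in Q) * ind (j \in Y).
Definition eB (X : {set 'I_n}) j := \sum_i ind (i \in X) * B i j.

Lemma SB_row X Y Q : SB X Y Q = \sum_i ind (i \in X) * (ind (i \in Q) * cB Y Q i).
Proof.
apply: eq_bigr => i _; rewrite /cB !mulr_sumr; apply: eq_bigr => j _; ring.
Qed.

Lemma stage1_point Q :
  GB Q <= p * MX (fun Y : {set 'I_n} => \sum_i phi (cB Y Q i))
          + MX (fun Y : {set 'I_n} => \sum_i (ind (i \in Q) - p) * phi (cB Y Q i)).
Proof.
apply: le_trans (MX_swap _) _.
rewrite (eq_MX (g := fun Y : {set 'I_n} => \sum_i p * phi (cB Y Q i) + \sum_i (ind (i \in Q) - p) * phi (cB Y Q i))); last first.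
  move=> Y; rewrite (eq_MX (g := fun X : {set 'I_n} => \sum_i ind (i \in X) * (ind (i \in Q) * cB Y Q i))); last first.
    by move=> X; rewrite SB_row.
  rewrite MX_closed -big_split; apply: eq_bigr => i _; rewrite ind_phi; simpl; ring.
apply: le_trans (MX_add _ _) _; rewrite lerD2r.
rewrite (eq_MX (g := fun Y : {set 'I_n} => p * \sum_i phi (cB Y Q i))); last by move=> Y; rewrite mulr_sumr.
exact: MX_scale.
Qed.

Definition dB (Q Q' : {set 'I_n}) j := \sum_i (ind (i \in Q) - ind (i \in Q')) * B i j.

Lemma stage1_fluct l : 0 < l ->
  Ex (fun Q => MX (fun Y : {set 'I_n} => \sum_i (ind (i \in Q) - p) * phi (cB Y Q i)))
  <= p * (2 * p * F2 * (l^-1 / 2)) + n%:R * (p * (l / 2)).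
Proof.
move=> l0.
apply: le_trans (contr_all p0 p1 (P := P) (a := fun i Y Q => cB Y Q i) _ _) _.
- move=> k Y Q kP; apply: big1 => j _; rewrite hB ?mul0r //.
  by rewrite (negbTE kP).
- move=> k i Y Q kP; apply: eq_bigr => j _.
  case: (eqVneq j k) => [->|jk]; first by rewrite hB ?mul0r // kP andbF.
  by rewrite ind_setD1.
apply: (@le_trans _ _ (E2 (fun Q Q' : {set 'I_n} => \sum_j ind (j \in Q) * `|dB Q Q' j|))).
  apply: E2_mono => // Q Q'.
  rewrite (eq_MX (g := fun Y : {set 'I_n} => \sum_j ind (j \in Y) * (ind (j \in Q) * dB Q Q' j))); last first.
    move=> Y; rewrite /cB /dB.
    under eq_bigr => i _ do rewrite mulr_sumr.
    rewrite exchange_big /=; apply: eq_bigr => j _; rewrite !mulr_sumr; apply: eq_bigr => i _; ring.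
  rewrite MX_closed; apply: ler_sum => j _; exact: phi_ind_abs.
rewrite E2_sum.
have Hj : forall j, E2 (fun Q Q' : {set 'I_n} => ind (j \in Q) * `|dB Q Q' j|)
   <= p * ((2 * p * (\sum_i B i j ^+ 2)) * (l^-1 / 2) + l / 2).
  move=> j; rewrite E2_ind_mul; last first.
    move=> Q Q'; congr `|_|; apply: eq_bigr => i _.
    case: (eqVneq i j) => [->|ij]; first by rewrite B_diag !mulr0.
    by rewrite ind_setD1.
  apply: ler_wpM2l => //; exact: (E2_abs p0 p1 (fun i => B i j) l0).
apply: le_trans (ler_sum _ (fun j _ => Hj j)) _.
rewrite (eq_bigr (fun j => (p * (2 * p) * (l^-1 / 2)) * (\sum_i B i j ^+ 2) + p * (l / 2))); last first.
  by move=> j _; ring.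
rewrite sum_affine /F2 exchange_big /=.
by rewrite le_eqVlt; apply/orP; left; apply/eqP; ring.
Qed.

Definition rB (Q Q' : {set 'I_n}) i := \sum_j (ind (j \in Q) - ind (j \in Q')) * B i j.

Lemma stage2_point Q :
  MX (fun Y : {set 'I_n} => \sum_i phi (cB Y Q i))
  <= p * MX (fun X : {set 'I_n} => \sum_j phi (eB X j))
     + MX (fun X : {set 'I_n} => \sum_j (ind (j \in Q) - p) * phi (eB X j)).
Proof.
rewrite (eq_MX (g := fun Y : {set 'I_n} => MX (fun X : {set 'I_n} => \sum_i ind (i \in X) * cB Y Q i))); last first.
  by move=> Y; rewrite MX_closed.
apply: le_trans (MX_swap _) _.
rewrite (eq_MX (g := fun X : {set 'I_n} => \sum_j p * phi (eB X j) + \sum_j (ind (j \in Q) - p) * phi (eB X j))); last first.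
  move=> X; rewrite (eq_MX (g := fun Y : {set 'I_n} => \sum_j ind (j \in Y) * (ind (j \in Q) * eB X j))); last first.
    move=> Y; rewrite /cB /eB.
    under eq_bigr => i _ do rewrite mulr_sumr.
    rewrite exchange_big /=; apply: eq_bigr => j _; rewrite !mulr_sumr; apply: eq_bigr => i _; ring.
  rewrite MX_closed -big_split; apply: eq_bigr => j _; rewrite ind_phi; simpl; ring.
apply: le_trans (MX_add _ _) _; rewrite lerD2r.
rewrite (eq_MX (g := fun X : {set 'I_n} => p * \sum_j phi (eB X j))); last by move=> X; rewrite mulr_sumr.
exact: MX_scale.
Qed.

Lemma Gfull_eq : MX (fun X : {set 'I_n} => \sum_j phi (eB X j)) = Gfull.
Proof.
apply: eq_MX => X; rewrite -MX_closed; apply: eq_MX => Y.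
rewrite /eB; under eq_bigr => j _ do rewrite mulr_sumr.
rewrite exchange_big /=; apply: eq_bigr => i _; apply: eq_bigr => j _; ring.
Qed.

Lemma stage2 l : 0 < l ->
  Ex (fun Q => MX (fun Y : {set 'I_n} => \sum_i phi (cB Y Q i)))
  <= p * Gfull + (2 * p * F2 * (l^-1 / 2) + n%:R * (l / 2)).
Proof.
move=> l0.
apply: le_trans (Ex_mono p0 p1 (stage2_point)) _.
rewrite Ex_add Ex_const Gfull_eq lerD2l.
apply: le_trans (contr_all p0 p1 (P := setT) (a := fun j X Q => eB X j) _ _) _.
- by move=> k X Q; rewrite inE.
- by [].
apply: (@le_trans _ _ (E2 (fun Q Q' : {set 'I_n} => \sum_i `|rB Q Q' i|))).
  apply: E2_mono => // Q Q'.
  rewrite (eq_MX (g := fun X : {set 'I_n} => \sum_i ind (i \in X) * rB Q Q' i)); last first.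
    move=> X; rewrite /eB /rB.
    under eq_bigr => j _ do rewrite mulr_sumr.
    rewrite exchange_big /=; apply: eq_bigr => i _; rewrite !mulr_sumr; apply: eq_bigr => j _; ring.
  rewrite MX_closed; apply: ler_sum => i _; exact: phi_le_abs.
rewrite E2_sum.
apply: le_trans (ler_sum _ (fun i _ => E2_abs p0 p1 (fun j => B i j) l0)) _.
rewrite (eq_bigr (fun i => (2 * p * (l^-1 / 2)) * (\sum_j B i j ^+ 2) + l / 2)); last first.
  by move=> i _; ring.
rewrite sum_affine /F2.
by rewrite le_eqVlt; apply/orP; left; apply/eqP; ring.
Qed.

Lemma GB_bound l : 0 < l ->
  Ex GB <= p * (p * Gfull) + (2 * (p * p * F2 / l) + n%:R * p * l).
Proof.
move=> l0.
apply: le_trans (Ex_mono p0 p1 stage1_point) _.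
rewrite Ex_add Ex_scale.
have h1 := stage2 l0; have h2 := stage1_fluct l0.
apply: le_trans (lerD (ler_wpM2l p0 h1) h2) _.
by rewrite le_eqVlt; apply/orP; left; apply/eqP; rewrite /F2; field; rewrite gt_eqF.
Qed.

End Main.

End A5.
Import A5.

Module A6.
Set Implicit Arguments. Unset Strict Implicit. Unset Printing Implicit Defensive.
Import Order.TTheory GRing.Theory Num.Theory.
Local Open Scope ring_scope.
Set Implicit Arguments. Unset Strict Implicit. Unset Printing Implicit Defensive.

Section Decouple.
Variable R : realType.
Variable n : nat.
Notation ind := (ind R).

Lemma Ex_abs (p : R) (f : {set 'I_n} -> R) : 0 <= p -> p <= 1 -> `|Ex p f| <= Ex p (fun Q => `|f Q|).
Proof.
move=> p0 p1; rewrite ler_norml; apply/andP; split.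
  rewrite -mulN1r -Ex_scale; apply: Ex_mono => // Q.
  by have := ler_norm (- f Q); rewrite normrN; lra.
by apply: Ex_mono => // Q; exact: ler_norm.
Qed.

Lemma Ex_indc (p : R) (j : 'I_n) : 0 <= p -> p <= 1 -> Ex p (fun Q => ind (j \notin Q)) = 1 - p.
Proof.
move=> p0 p1; rewrite -[RHS](Ex_const n p); apply: (Ex_eq_split p0 p1 (k:=j)) => Q jQ.
by rewrite setU11 jQ /A1.ind /=; ring.
Qed.

Lemma Ex_pair (p : R) (i j : 'I_n) : 0 <= p -> p <= 1 ->
  Ex p (fun Q => ind (i \in Q) * ind (j \notin Q)) = if i == j then 0 else p * (1 - p).
Proof.
move=> p0 p1; case: (eqVneq i j) => [<-|ij].
  rewrite -[RHS](Ex_const n p); apply: eq_bigr => Q _; congr (_ * _).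
  by case: (i \in Q); rewrite /A1.ind /= ?mulr0 ?mul0r.
rewrite Ex_ind_mul //; first by rewrite Ex_indc.
by move=> Q; rewrite in_setD1 eq_sym ij.
Qed.

Definition AP (A : 'I_n -> 'I_n -> R) (P : {set 'I_n}) := fun i j => ind (i \in P) * ind (j \notin P) * A i j.
Definition nAP (A : 'I_n -> 'I_n -> R) (P : {set 'I_n}) := fun i j => - AP A P i j.

Lemma AP_supp (A : 'I_n -> 'I_n -> R) (P : {set 'I_n}) (i j : 'I_n) : ~~ ((i \in P) && (j \notin P)) -> AP A P i j = 0.
Proof. by rewrite /AP; case: (i \in P); case: (j \in P) => //= _; rewrite /A1.ind /= ?(mul0r, mulr0, mul1r). Qed.

Lemma nAP_supp (A : 'I_n -> 'I_n -> R) (P : {set 'I_n}) (i j : 'I_n) : ~~ ((i \in P) && (j \notin P)) -> nAP A P i j = 0.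
Proof. by move=> h; rewrite /nAP AP_supp ?oppr0. Qed.

Lemma decouple_id (A : 'I_n -> 'I_n -> R) (X Y Q : {set 'I_n}) :
  SB A X Y Q = \sum_i ind (i \in X) * ind (i \in Q) * A i i * ind (i \in Q) * ind (i \in Y)
    + 4 * Ex (1/2) (fun P => SB (AP A P) X Y Q).
Proof.
have h0 : (0 : R) <= 1/2 by rewrite divr_ge0.
have h1 : (1/2 : R) <= 1 by rewrite ler_pdivrMr // mul1r ler1n.
rewrite /SB Ex_sum; under [X in _ = _ + _ * X]eq_bigr => i _ do rewrite Ex_sum.
rewrite mulr_sumr -big_split /=; apply: eq_bigr => i _.
rewrite (bigD1 i) //= mulr_sumr [in RHS](bigD1 i) //=.
rewrite [X in _ = _ + (_ + X)](eq_bigr (fun j => ind (i \in X) * ind (i \in Q) * A i j * ind (j \in Q) * ind (j \in Y))); last first.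
  move=> j ji.
  rewrite (Ex_ext _ (g := fun P => (ind (i \in X) * ind (i \in Q) * A i j * ind (j \in Q) * ind (j \in Y))
     * (ind (i \in P) * ind (j \notin P)))); last by move=> P; rewrite /AP; ring.
  rewrite Ex_scale Ex_pair // eq_sym (negbTE ji); field.
  done.
rewrite (Ex_ext _ (g := fun P => (ind (i \in X) * ind (i \in Q) * A i i * ind (i \in Q) * ind (i \in Y))
     * (ind (i \in P) * ind (i \notin P)))); last by move=> P; rewrite /AP; ring.
rewrite Ex_scale Ex_pair // eqxx; ring.
Qed.

Lemma SB_le_GB (B : 'I_n -> 'I_n -> R) (X Y Q : {set 'I_n}) : SB B X Y Q <= GB B Q.
Proof.
apply: le_trans (le_MX _ X); exact: (le_MX (fun Y => SB B X Y Q) Y).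
Qed.

Lemma SB_neg (A : 'I_n -> 'I_n -> R) (P X Y Q : {set 'I_n}) :
  SB (nAP A P) X Y Q = - SB (AP A P) X Y Q.
Proof.
rewrite /SB -sumrN; apply: eq_bigr => i _; rewrite -sumrN; apply: eq_bigr => j _.
rewrite /nAP; ring.
Qed.

Lemma abs_SB_AP (A : 'I_n -> 'I_n -> R) (P X Y Q : {set 'I_n}) :
  `|SB (AP A P) X Y Q| <= GB (AP A P) Q + GB (nAP A P) Q.
Proof.
have h1 := SB_le_GB (AP A P) X Y Q; have h2 := SB_le_GB (nAP A P) X Y Q.
rewrite SB_neg in h2.
have g1 : 0 <= GB (AP A P) Q by exact: MX_ge0.
have g2 : 0 <= GB (nAP A P) Q by exact: MX_ge0.
case: (lerP 0 (SB (AP A P) X Y Q)) => h; [rewrite ger0_norm // | rewrite ltr0_norm //]; lra.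
Qed.

Lemma Ex_ge0 (p : R) (f : {set 'I_n} -> R) : 0 <= p -> p <= 1 -> (forall Q, 0 <= f Q) -> 0 <= Ex p f.
Proof.
move=> p0 p1 H; rewrite -(Ex_const n p 0); exact: Ex_mono.
Qed.

Lemma C_point (A : 'I_n -> 'I_n -> R) (Q : {set 'I_n}) :
  MX (fun X : {set 'I_n} => MX (fun Y : {set 'I_n} => `|SB A X Y Q|))
  <= \sum_i ind (i \in Q) * `|A i i| + 4 * Ex (1/2) (fun P => GB (AP A P) Q + GB (nAP A P) Q).
Proof.
have h0 : (0 : R) <= 1/2 by rewrite divr_ge0.
have h1 : (1/2 : R) <= 1 by rewrite ler_pdivrMr // mul1r ler1n.
have Hd : 0 <= \sum_i ind (i \in Q) * `|A i i|.
  by apply: sumr_ge0 => i _; rewrite mulr_ge0 // ind_ge0.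
have He : 0 <= Ex (1/2) (fun P => GB (AP A P) Q + GB (nAP A P) Q).
  by apply: Ex_ge0 => // P; rewrite addr_ge0 // MX_ge0.
apply: MX_le; first by rewrite addr_ge0 // mulr_ge0.
move=> X; apply: MX_le; first by rewrite addr_ge0 // mulr_ge0.
move=> Y; rewrite decouple_id.
apply: le_trans (ler_normD _ _) _; apply: lerD.
  apply: le_trans (ler_norm_sum _ _ _) _; apply: ler_sum => i _.
  by case: (i \in X); case: (i \in Q); case: (i \in Y);
     rewrite /A1.ind /= ?(mul0r, mulr0, mul1r, mulr1) ?normr0.
rewrite normrM ger0_norm //; apply: ler_wpM2l => //.
apply: le_trans (Ex_abs _ h0 h1) _.
by apply: Ex_mono => // P; exact: abs_SB_AP.
Qed.

End Decouple.

End A6.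
Import A6.

Module A7.
Set Implicit Arguments. Unset Strict Implicit. Unset Printing Implicit Defensive.
Import Order.TTheory GRing.Theory Num.Theory.
Local Open Scope ring_scope.
Set Implicit Arguments. Unset Strict Implicit. Unset Printing Implicit Defensive.

Section Final.
Variable R : realType.
Variable n : nat.
Notation ind := (ind R).

Lemma sum_in_ind (F : 'I_n -> R) (X : {set 'I_n}) : \sum_(i in X) F i = \sum_i ind (i \in X) * F i.
Proof.
rewrite big_mkcond /=; apply: eq_bigr => i _.
by case: (i \in X); rewrite /A1.ind /= ?mul1r ?mul0r.
Qed.

Lemma cut_le (A : 'M[R]_n) (I J : {set 'I_n}) :
  `|\sum_(i in I) \sum_(j in J) A i j| <= cut_norm A.
Proof.
rewrite /cut_norm; apply: le_trans _ (le_MX _ I).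
exact: (le_MX (fun J : {set 'I_n} => `|\sum_(i in I) \sum_(j in J) A i j|) J).
Qed.

Lemma cut_sub (A : 'M[R]_n) (Q : {set 'I_n}) :
  cut_norm (principal_submx A Q) <=
  MX (fun X : {set 'I_n} => MX (fun Y : {set 'I_n} => `|SB (fun i j => A i j) X Y Q|)).
Proof.
rewrite /cut_norm; apply: MX_le; first exact: MX_ge0.
move=> I; apply: MX_le; first exact: MX_ge0.
move=> J; apply: le_trans _ (le_MX _ (enum_val @: I)).
apply: le_trans _ (le_MX (fun Y : {set 'I_n} => `|SB (fun i j => A i j) (enum_val @: I) Y Q|) (enum_val @: J)).
rewrite le_eqVlt; apply/orP; left; apply/eqP; congr `|_|.
have inj : forall S : {set 'I_#|Q|}, {in S &, injective (@enum_val _ (mem Q))}.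
  by move=> S x y _ _; apply: enum_val_inj.
have sub : forall (S : {set 'I_#|Q|}) (x : 'I_n), x \in enum_val @: S -> x \in Q.
  by move=> S x /imsetP [i _ ->]; exact: enum_valP.
rewrite /SB.
transitivity (\sum_(x in enum_val @: I) \sum_(y in enum_val @: J) A x y).
  rewrite big_imset //=; apply: eq_bigr => i _.
  by rewrite big_imset //=; apply: eq_bigr => j _; rewrite mxE.
rewrite sum_in_ind; apply: eq_bigr => x _; rewrite sum_in_ind mulr_sumr; apply: eq_bigr => y _.
case: (boolP (x \in enum_val @: I)) => hx; last by rewrite /A1.ind /= !mul0r.
case: (boolP (y \in enum_val @: J)) => hy; last by rewrite /A1.ind /= !(mul0r, mulr0).
by rewrite (sub _ _ hx) (sub _ _ hy) /A1.ind /=; ring.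
Qed.

Lemma Ex_swap (p p' : R) (F : {set 'I_n} -> {set 'I_n} -> R) :
  Ex p (fun Q => Ex p' (fun P => F P Q)) = Ex p' (fun P => Ex p (fun Q => F P Q)).
Proof.
rewrite /A2.Ex; under eq_bigr => Q _ do rewrite mulr_sumr.
rewrite exchange_big /=; apply: eq_bigr => P _; rewrite mulr_sumr; apply: eq_bigr => Q _.
by rewrite mulrCA.
Qed.

Lemma sum2_ind (A : 'M[R]_n) (I J : {set 'I_n}) :
  \sum_i \sum_j ind (i \in I) * A i j * ind (j \in J) = \sum_(i in I) \sum_(j in J) A i j.
Proof.
rewrite sum_in_ind; apply: eq_bigr => i _; rewrite sum_in_ind mulr_sumr; apply: eq_bigr => j _; ring.
Qed.

Lemma Gfull_AP (A : 'M[R]_n) (P : {set 'I_n}) :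
  Gfull (AP (fun i j => A i j) P) <= cut_norm A /\ Gfull (nAP (fun i j => A i j) P) <= cut_norm A.
Proof.
have cn0 : 0 <= cut_norm A by exact: MX_ge0.
have key : forall X Y : {set 'I_n},
    \sum_i \sum_j ind (i \in X) * AP (fun i j => A i j) P i j * ind (j \in Y)
    = \sum_(i in X :&: P) \sum_(j in Y :\: P) A i j.
  move=> X Y; rewrite -sum2_ind; apply: eq_bigr => i _; apply: eq_bigr => j _.
  rewrite /AP in_setI in_setD.
  by case: (i \in X); case: (i \in P); case: (j \in Y); case: (j \in P);
     rewrite /A1.ind /= ?(mul0r, mulr0, mul1r, mulr1).
split; apply: MX_le => // X; apply: MX_le => // Y.
  by rewrite key; apply: le_trans (ler_norm _) (cut_le _ _ _).
have -> : \sum_i \sum_j ind (i \in X) * nAP (fun i j => A i j) P i j * ind (j \in Y)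
    = - \sum_i \sum_j ind (i \in X) * AP (fun i j => A i j) P i j * ind (j \in Y).
  rewrite -sumrN; apply: eq_bigr => i _; rewrite -sumrN; apply: eq_bigr => j _; rewrite /nAP; ring.
rewrite key; apply: le_trans (cut_le A (X :&: P) (Y :\: P)).
by rewrite -normrN ler_norm.
Qed.

Lemma F2_AP (A : 'M[R]_n) (P : {set 'I_n}) :
  F2 (AP (fun i j => A i j) P) <= \sum_i \sum_j A i j ^+ 2 /\
  F2 (nAP (fun i j => A i j) P) <= \sum_i \sum_j A i j ^+ 2.
Proof.
have key : forall i j, AP (fun i j => A i j) P i j ^+ 2 <= A i j ^+ 2.
  move=> i j; rewrite /AP; case: (i \in P); case: (j \in P);
  rewrite /A1.ind /= ?(mul0r, mulr0, mul1r, mulr1) ?expr0n ?sqr_ge0 //.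
split; apply: ler_sum => i _; apply: ler_sum => j _; rewrite ?/nAP ?sqrrN; exact: key.
Qed.

Lemma main_bound (A : 'M[R]_n) (p l : R) : 0 <= p -> p <= 1 -> 0 < l ->
  Ex p (fun Q => cut_norm (principal_submx A Q))
  <= p * \sum_i `|A i i| +
     8 * (p * (p * cut_norm A) + (2 * (p * p * (\sum_i \sum_j A i j ^+ 2) / l) + n%:R * p * l)).
Proof.
move=> p0 p1 l0.
have h0 : (0 : R) <= 1/2 by rewrite divr_ge0.
have h1 : (1/2 : R) <= 1 by rewrite ler_pdivrMr // mul1r ler1n.
set SA := \sum_i \sum_j A i j ^+ 2.
set bnd := p * (p * cut_norm A) + (2 * (p * p * SA / l) + n%:R * p * l).
apply: le_trans (Ex_mono p0 p1 (fun Q => le_trans (cut_sub A Q) (C_point _ Q))) _.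
rewrite Ex_add Ex_sum Ex_scale Ex_swap.
have -> : \sum_i Ex p (fun Q => ind (i \in Q) * `|A i i|) = p * \sum_i `|A i i|.
  rewrite mulr_sumr; apply: eq_bigr => i _; rewrite (Ex_ind_mul p0 p1 (k := i) (g := fun _ => `|A i i|)) // Ex_const.
  done.
rewrite lerD2l.
have -> : (8 : R) * bnd = 4 * (2 * bnd) by ring.
apply: ler_wpM2l => //.
rewrite -[X in _ <= X](Ex_const n (1/2)); apply: Ex_mono => // P.
rewrite Ex_add.
have mono : forall G F, G <= cut_norm A -> F <= SA ->
    p * (p * G) + (2 * (p * p * F / l) + n%:R * p * l) <= bnd.
  move=> G F hG hF; rewrite /bnd lerD // ?ler_wpM2l // ?mulr_ge0 //.
  rewrite lerD2r ler_wpM2l // ler_pM2r ?invr_gt0 // ler_wpM2l // mulr_ge0 //.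
have [g1 g2] := Gfull_AP A P; have [f1 f2] := F2_AP A P.
have e1 := GB_bound p0 p1 (@AP_supp R n (fun i j => A i j) P) l0.
have e2 := GB_bound p0 p1 (@nAP_supp R n (fun i j => A i j) P) l0.
have -> : 2 * bnd = bnd + bnd by ring.
apply: lerD.
  exact: le_trans e1 (mono _ _ g1 f1).
exact: le_trans e2 (mono _ _ g2 f2).
Qed.

End Final.

End A7.
Import A7.

Unset Implicit Arguments.
Set Strict Implicit.

Theorem corollary1p3 (R : realType) (K1 K2 K3 K4 : R) :
  0 < K1 -> 0 < K2 -> 0 < K3 -> 0 < K4 ->
  exists K : R, 0 < K /\
    forall (n : nat) (eps : R) (A : 'M[R]_n) (q : R),
      0 < eps -> eps <= 1 ->
      K1 * eps ^- 2 <= q -> q <= n%:R ->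
      cut_norm A <= K2 * eps * n%:R ^+ 2 ->
      frob_norm A <= K3 * n%:R ->
      (forall i j, `|A i j| <= K4 * eps^-1) ->
      binom_subset_expect (q / n%:R) (fun Q => cut_norm (principal_submx A Q))
        <= K * eps * q ^+ 2.
Proof.
move=> K10 K20 K30 K40.
exists (K4 / K1 + 8 * K2 + 16 * (K3 ^+ 2 / K1) + 8).
split.
  have : 0 < K4 / K1 by rewrite divr_gt0.
  have : 0 < K3 ^+ 2 / K1 by rewrite divr_gt0 // exprn_gt0.
  lra.
move=> n eps A q e0 e1 hq qn hC hF hA.
have eps2 : 0 < eps ^- 2 by rewrite invr_gt0 exprn_gt0.
have q0 : 0 < q by apply: lt_le_trans hq; rewrite mulr_gt0.
have N0 : 0 < n%:R :> R by apply: lt_le_trans qn.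
set N := n%:R in qn hC hF N0 *.
set p := q / N.
have p0 : 0 <= p by rewrite /p divr_ge0 // ltW.
have p1 : p <= 1 by rewrite /p ler_pdivrMr // mul1r.
have hpN : p * N = q by rewrite /p mulfVK // gt_eqF.
set l := eps * q.
have l0 : 0 < l by rewrite /l mulr_gt0.
change (Ex p (fun Q => cut_norm (principal_submx A Q)) <= (K4 / K1 + 8 * K2 + 16 * (K3 ^+ 2 / K1) + 8) * eps * q ^+ 2).
apply: le_trans (main_bound A p0 p1 l0) _.
set D := \sum_i `|A i i|.
set SA := \sum_i \sum_j A i j ^+ 2.
set C := cut_norm A in hC *.
set u := q / eps.
set v := eps * q ^+ 2.
have hD : D <= N * (K4 * eps^-1).
  rewrite /D; apply: le_trans (ler_sum _ (fun i _ => hA i i)) _.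
  by rewrite sumr_const card_ord mulr_natl.
have hSA : SA <= (K3 * N) ^+ 2.
  have SA0 : 0 <= SA by apply: sumr_ge0 => i _; apply: sumr_ge0 => j _; exact: sqr_ge0.
  rewrite -ler_sqrt ?sqr_ge0 // sqrtr_sqr ger0_norm; first exact: hF.
  by rewrite mulr_ge0 // ltW.
have T0 : p * D <= K4 * u.
  apply: le_trans (ler_wpM2l p0 hD) _.
  by rewrite le_eqVlt; apply/orP; left; apply/eqP; rewrite /u -hpN; field; rewrite gt_eqF.
have T1 : p * (p * C) <= K2 * v.
  apply: le_trans (ler_wpM2l p0 (ler_wpM2l p0 hC)) _.
  by rewrite le_eqVlt; apply/orP; left; apply/eqP; rewrite /v -hpN; ring.
have T2 : p * p * SA / l <= K3 ^+ 2 * u.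
  rewrite ler_pdivrMr //.
  apply: le_trans (ler_wpM2l (mulr_ge0 p0 p0) hSA) _.
  rewrite le_eqVlt; apply/orP; left; apply/eqP.
  have -> : p * p * (K3 * N) ^+ 2 = K3 ^+ 2 * (p * N) ^+ 2 by ring.
  by rewrite hpN /u /l; field; rewrite gt_eqF.
have T3 : N * p * l = v by rewrite /v /l -hpN; ring.
have key : K1 * u <= v.
  have h := ler_wpM2l (ltW (mulr_gt0 q0 e0)) hq.
  rewrite /u /v; apply: le_trans _ (le_trans h _).
    by rewrite le_eqVlt; apply/orP; left; apply/eqP; field; rewrite gt_eqF.
  by rewrite le_eqVlt; apply/orP; left; apply/eqP; ring.
have k1 : K4 * u <= K4 / K1 * v.
  rewrite -subr_ge0; have -> : K4 / K1 * v - K4 * u = (K4 / K1) * (v - K1 * u).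
    by field; rewrite gt_eqF.
  by rewrite mulr_ge0 ?subr_ge0 // divr_ge0 // ltW.
have k2 : K3 ^+ 2 * u <= K3 ^+ 2 / K1 * v.
  rewrite -subr_ge0; have -> : K3 ^+ 2 / K1 * v - K3 ^+ 2 * u = (K3 ^+ 2 / K1) * (v - K1 * u).
    by field; rewrite gt_eqF.
  by rewrite mulr_ge0 ?subr_ge0 // divr_ge0 ?sqr_ge0 // ltW.
have -> : (K4 / K1 + 8 * K2 + 16 * (K3 ^+ 2 / K1) + 8) * eps * q ^+ 2
  = K4 / K1 * v + 8 * (K2 * v) + 16 * (K3 ^+ 2 / K1 * v) + 8 * v by rewrite /v; ring.
rewrite T3.
lra.
Qed.
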